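(* Let $G$ be a discrete group, $\mathbf k\subseteq{\rm Seq}(\mathbf C)$ a $\sigma$-subring with constants $\mathbf C$, $\alpha\in\mathcal C_c(G,\mathbf k)$, and consider the solutions of $\sigma(s)=\alpha\star s$ in $\mathcal C(G,{\rm Seq}(\mathbf C))$, equipped with the topology of pointwise convergence on $\mathbf Z_{\ge0}\times G$. Then: (a) ${\rm Sol}_c(\alpha,L^c)$ is dense in ${\rm Sol}(\alpha,L)$; (b) ${\rm Sol}_{\rm per}(\alpha,L^{\rm per})$ is dense in ${\rm Sol}(\alpha,L)$ if and only if $G$ is residually finite; (c) if $G$ is not finite, ${\rm Sol}_c(\alpha,L^c)\cap{\rm Sol}_{\rm per}(\alpha,L^{\rm per})=\{0\}$; (d) if $G$ is finite, ${\rm Sol}(\alpha,L)={\rm Sol}_c(\alpha,L^c)={\rm Sol}_{\rm per}(\alpha,L^{\rm per})\simeq\mathbf C^{|G|}$.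
   Context: ${\rm Seq}(\mathbf C)$: complex sequences indexed by $t\in\mathbf Z_{\ge0}$ with shift $\sigma(x)^{(t)}=x^{(t+1)}$. The equation $\sigma(s)=\alpha\star s$ means $s_g^{(t+1)}=\sum_{h\in G}\alpha^{(t)}_hs^{(t)}_{h^{-1}g}$. ${\rm Sol}(\alpha,L)$ is the $\mathbf C$-space of all solutions; ${\rm Sol}_c(\alpha,L^c)$ those with $s^{(t)}$ of finite support for every $t$; ${\rm Sol}_{\rm per}(\alpha,L^{\rm per})$ those which are $H$-periodic ($s_{gh}=s_g$ for all $g\in G,h\in H$) for some normal subgroup $H$ of finite index in $G$. *)

(* Defs.v *)
From HB Require Import structures.
From mathcomp Require Import all_boot all_order all_algebra.
From mathcomp Require Import complex reals.
Set Implicit Arguments. Unset Strict Implicit. Unset Printing Implicit Defensive.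
Import Order.TTheory GRing.Theory Num.Theory.
Local Open Scope ring_scope.

(* Seq(C) = nat -> C ; elements of C(G, Seq(C)) are functions G -> nat -> C,
   written s g t = s_g^{(t)}.  G is a discrete group (an arbitrary, possibly
   infinite, mathcomp [groupType]). *)

Section Defs.
Variables (C : numDomainType) (G : groupType).

Definition shift (x : nat -> C) : nat -> C := fun t => x t.+1.

Definition sigma_subring_const (k : (nat -> C) -> Prop) : Prop :=
  [/\ (forall c : C, k (fun _ => c)),
      (forall x y, k x -> k y -> k (fun t => x t - y t)),
      (forall x y, k x -> k y -> k (fun t => x t * y t)),
      (forall x, k x -> k (shift x)) &
      (forall x, k x -> shift x = x -> exists c : C, x = fun _ => c)].

(* The support of alpha is contained in the finite duplicate-free list S, so
   the sum over h in G in alpha * s equals the sum over h in S. *)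
Definition Sol (alpha : G -> nat -> C) (S : seq G) (s : G -> nat -> C) : Prop :=
  forall (g : G) (t : nat),
    s g t.+1 = \sum_(h <- S) alpha h t * s (h^-1 * g)%g t.

Definition Sol_c alpha S (s : G -> nat -> C) : Prop :=
  Sol alpha S s /\
  forall t : nat, exists F : seq G, forall g, g \notin F -> s g t = 0.

Definition normal_finite_index (H : G -> Prop) : Prop :=
  [/\ H 1%g,
      (forall x y, H x -> H y -> H (x * y)%g),
      (forall x, H x -> H x^-1%g),
      (forall x g, H x -> H (g^-1 * x * g)%g) &
      exists reps : seq G, forall g, exists2 r, r \in reps & H (r^-1 * g)%g].

Definition periodic (H : G -> Prop) (s : G -> nat -> C) : Prop :=
  forall g h, H h -> s (g * h)%g = s g.

Definition Sol_per alpha S (s : G -> nat -> C) : Prop :=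
  Sol alpha S s /\ exists H, normal_finite_index H /\ periodic H s.

(* A is dense in B for the topology of pointwise convergence on
   Z_{>=0} x G (product topology), unfolded: every basic neighbourhood of a
   point of B meets A. *)
Definition dense_in (A B : (G -> nat -> C) -> Prop) : Prop :=
  forall s, B s -> forall (F : seq (nat * G)) (e : C), 0 < e ->
    exists u, A u /\ forall p, p \in F -> `|u p.2 p.1 - s p.2 p.1| < e.

End Defs.

Definition residually_finite (G : groupType) : Prop :=
  forall g : G, g != 1%g ->
    exists H : G -> Prop, normal_finite_index H /\ ~ H g.

Definition finite_group (G : groupType) : Prop :=
  exists e : seq G, forall g, g \in e.

(* Main.v *)
Require Import Defs.
From HB Require Import structures.
From mathcomp Require Import all_boot all_order all_algebra.
From mathcomp Require Import complex reals.
From Stdlib Require Import Classical ClassicalEpsilon FunctionalExtensionality.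
Set Implicit Arguments. Unset Strict Implicit. Unset Printing Implicit Defensive.
Import Order.TTheory GRing.Theory Num.Theory.
Local Open Scope ring_scope.

Section Aux.
Variables (C : numDomainType) (G : groupType).
Variables (alpha : G -> nat -> C) (S : seq G).

Fixpoint solf (init : G -> C) (t : nat) : G -> C :=
  match t with
  | 0 => init
  | t'.+1 => fun g => \sum_(h <- S) alpha h t' * solf init t' (h^-1 * g)%g
  end.

Definition sol init : G -> nat -> C := fun g t => solf init t g.

Lemma sol_Sol init : Sol alpha S (sol init).
Proof. by move=> g t. Qed.

Lemma Sol_uniq s : Sol alpha S s -> forall t g, s g t = solf (fun x => s x 0%N) t g.
Proof.
move=> hs; elim=> [|t IH] g //=.
rewrite hs; apply: eq_bigr => h _; by rewrite IH.
Qed.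

Lemma Sol_eq s : Sol alpha S s -> s = sol (fun x => s x 0%N).
Proof.
move=> hs; apply: functional_extensionality => g.
apply: functional_extensionality => t; exact: Sol_uniq.
Qed.

Fixpoint reach (t : nat) (g : G) : seq G :=
  match t with
  | 0 => [:: g]
  | t'.+1 => flatten [seq reach t' (h^-1 * g)%g | h <- S]
  end.

Lemma solf_local i1 i2 t g :
  (forall x, x \in reach t g -> i1 x = i2 x) -> solf i1 t g = solf i2 t g.
Proof.
elim: t g => [|t IH] g /= H; first by apply: H; rewrite inE.
apply: eq_big_seq => h hS; congr (_ * _); apply: IH => x hx; apply: H.
apply/flattenP; exists (reach t (h^-1 * g)%g) => //; exact: map_f.
Qed.

Lemma solf0 t g : solf (fun _ => 0) t g = 0.
Proof.
elim: t g => [|t IH] g //=; rewrite big1 // => h _; by rewrite IH mulr0.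
Qed.

Fixpoint words (t : nat) : seq G :=
  match t with
  | 0 => [:: 1%g]
  | t'.+1 => [seq (w * h^-1)%g | h <- S, w <- words t']
  end.

Lemma reach_words t g x : x \in reach t g -> exists2 w, w \in words t & x = (w * g)%g.
Proof.
elim: t g x => [|t IH] g x /=.
  by rewrite inE => /eqP ->; exists 1%g; rewrite ?inE ?mul1g.
move=> /flattenP [l /mapP [h hS ->] hx].
have [w hw ->] := IH _ _ hx.
exists (w * h^-1)%g; last by rewrite mulgA.
by apply/allpairsP; exists (h, w).
Qed.

Lemma solf_lin a i1 i2 i3 t g : (forall x, i3 x = a * i1 x + i2 x) ->
  solf i3 t g = a * solf i1 t g + solf i2 t g.
Proof.
move=> H; elim: t g => [|t IH] g //=.
rewrite mulr_sumr -big_split /=; apply: eq_bigr => h _.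
by rewrite IH mulrDr mulrCA.
Qed.

Lemma solf_per (H : G -> Prop) init t g h : H h ->
  (forall x, init (x * h)%g = init x) -> solf init t (g * h)%g = solf init t g.
Proof.
move=> hh hi; elim: t g => [|t IH] g //=.
apply: eq_bigr => h' _; by rewrite mulgA IH.
Qed.

Lemma nfi_inter (H1 H2 : G -> Prop) : normal_finite_index H1 -> normal_finite_index H2 ->
  normal_finite_index (fun x => H1 x /\ H2 x).
Proof.
move=> [a1 b1 c1 d1 [r1 e1]] [a2 b2 c2 d2 [r2 e2]]; split.
- by split.
- by move=> x y [] ?? [] ??; split; auto.
- by move=> x [] ??; split; auto.
- by move=> x g [] ??; split; auto.
pose pk (p : G * G) := epsilon (inhabits 1%g)
   (fun c => H1 (p.1^-1 * c)%g /\ H2 (p.2^-1 * c)%g).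
exists [seq pk p | p <- [seq (x, y) | x <- r1, y <- r2]] => g.
have [x xr hx] := e1 g; have [y yr hy] := e2 g.
have [hc1 hc2] : H1 (x^-1 * pk (x, y))%g /\ H2 (y^-1 * pk (x, y))%g.
  by apply: (epsilon_spec (inhabits 1%g) (fun c => H1 (x^-1 * c)%g /\ H2 (y^-1 * c)%g)); exists g.
exists (pk (x, y)).
  by apply: map_f; apply/allpairsP; exists (x, y).
have E : forall z, ((pk (x, y))^-1 * g = (z^-1 * pk (x, y))^-1 * (z^-1 * g))%g.
  by move=> z; rewrite invgM invgK !mulgA mulgK.
by split; [rewrite (E x); apply: b1 => //; apply: c1 | rewrite (E y); apply: b2 => //; apply: c2].
Qed.

Lemma nfiT : normal_finite_index (fun _ : G => True).
Proof. by split=> //; exists [:: 1%g] => g; exists 1%g; rewrite ?inE. Qed.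

Lemma nfi_sep (D : seq G) : residually_finite G -> (forall g, g \in D -> g != 1%g) ->
  exists H, normal_finite_index H /\ forall g, g \in D -> ~ H g.
Proof.
move=> rf; elim: D => [|d D IH] hD; first by exists (fun _ => True); split=> //; exact: nfiT.
have [H [hH hn]] := IH (fun g hg => hD g (mem_behead (s := d :: D) hg)).
have [K [hK hk]] := rf d (hD d (mem_head _ _)).
exists (fun x => H x /\ K x); split; first exact: nfi_inter.
move=> g; rewrite inE => /orP [/eqP -> [] //| hg [] /hn]; exact.
Qed.

End Aux.

Theorem proposition1p13 (R : realType) (G : groupType)
  (k : (nat -> R[i]) -> Prop) (hk : sigma_subring_const k)
  (alpha : G -> nat -> R[i]) (S : seq G)
  (hS : uniq S) (halpha_supp : forall h, h \notin S -> alpha h = (fun _ => 0))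
  (halpha_k : forall h, k (alpha h)) :
  [/\ dense_in (Sol_c alpha S) (Sol alpha S),
      (dense_in (Sol_per alpha S) (Sol alpha S) <-> residually_finite G),
      (~ finite_group G ->
         forall s, Sol_c alpha S s -> Sol_per alpha S s -> s = (fun _ _ => 0)) &
      (forall e : seq G, uniq e -> (forall g, g \in e) ->
         (forall s, (Sol alpha S s <-> Sol_c alpha S s) /\
                    (Sol alpha S s <-> Sol_per alpha S s)) /\
         exists f : 'rV[R[i]]_(size e) -> (G -> nat -> R[i]),
           [/\ (forall a x y g t, f (a *: x + y) g t = a * f x g t + f y g t),
               injective f &
               (forall s, Sol alpha S s <-> exists v, s = f v)])].
Proof.
split.
-
  move=> s hs F e he.
  pose L := flatten [seq reach S p.1 p.2 | p <- F].
  pose init x := if x \in L then s x 0%N else 0.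
  exists (sol alpha S init); split.
    split; first exact: sol_Sol.
    move=> t; exists [seq (w^-1 * x)%g | w <- words S t, x <- L] => g hg.
    rewrite /sol -(solf0 alpha S t g); apply: solf_local => x hx.
    rewrite /init; case: ifP => // xL; exfalso; move/negP: hg; apply.
    have [w hw xw] := reach_words hx; rewrite xw in xL.
    by apply/allpairsP; exists (w, (w * g)%g); rewrite /= mulKg.
  move=> p hp; rewrite /sol (Sol_uniq hs).
  rewrite (@solf_local _ _ _ _ init (fun x => s x 0%N)) ?subrr ?normr0 // => x hx.
  rewrite /init; case: ifP => // /negP; case; apply/flattenP.
  by exists (reach S p.1 p.2) => //; apply: map_f.
- split.
  + move=> hd g hg.
    pose init (x : G) : R[i] := if x == 1%g then 1 else 0.
    have he : (0 : R[i]) < 2^-1 by rewrite invr_gt0 ltr0n.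
    have [u [[_ [H [hH hper]]] hu]] :=
      hd (sol alpha S init) (sol_Sol _ _ _) [:: (0%N, 1%g); (0%N, g)] _ he.
    exists H; split => // Hg.
    have h1 := hu (0%N, 1%g) (mem_head _ _).
    have h2 := hu (0%N, g) (mem_last (0%N, 1%g) [:: (0%N, g)]).
    have E : u g = u 1%g by rewrite -{1}(mul1g g) hper.
    move: h1 h2; rewrite /= /sol /= /init eqxx (negbTE hg) subr0 E => h1 h2.
    have : `|(1 : R[i])| < 2^-1 + 2^-1.
      rewrite -{1}(subrK (u 1%g 0%N) 1); apply: le_lt_trans (ler_normD _ _) _.
      by rewrite -normrN opprB; apply: ltrD.
    by rewrite normr1 -mulr2n -[_ *+ 2]mulr_natr mulVf ?ltxx // pnatr_eq0.
  + move=> rf s hs F e he.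
    pose L := flatten [seq reach S p.1 p.2 | p <- F].
    pose D := [seq g <- [seq (x^-1 * y)%g | x <- L, y <- L] | g != 1%g].
    have hD1 : forall g, g \in D -> g != 1%g by move=> g; rewrite mem_filter => /andP [].
    have [H [hH hD]] := nfi_sep rf hD1.
    have sep : forall x y, x \in L -> y \in L -> H (x^-1 * y)%g -> x = y.
      move=> x y xL yL hxy; apply/eqP/negPn/negP => nxy; apply: (hD (x^-1 * y)%g) => //.
      rewrite mem_filter; apply/andP; split.
        by rewrite mulg_eq1 eqg_inv.
      by apply/allpairsP; exists (x, y).
    pose P z := fun x : G => if excluded_middle_informative (H (x^-1 * z)%g) then true else false.
    pose init z := let i := find (P z) L in if (i < size L)%N then s (nth 1%g L i) 0%N else 0.
    case: hH => [h1 hM hV hC [reps hreps]].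
    have hPe : forall z h, H h -> P (z * h)%g =1 P z.
      move=> z h hh x; rewrite /P.
      case: excluded_middle_informative => a; case: excluded_middle_informative => b //.
        case: b; have -> : (x^-1 * z = x^-1 * (z * h) * h^-1)%g by rewrite mulgA mulgK.
        by apply: hM => //; apply: hV.
      by case: a; rewrite mulgA; apply: hM.
    exists (sol alpha S init); split.
      split; first exact: sol_Sol.
      exists H; split; first by split => //; exists reps.
      move=> g h hh; apply: functional_extensionality => t.
      apply: (solf_per _ _ (H := H)) => // x.
      by rewrite /init (eq_find (hPe x h hh)).
    move=> p hp.
    have initL : forall z, z \in L -> init z = s z 0%N.
      move=> z zL; rewrite /init /=.
      have hz : has (P z) L.
        apply/hasP; exists z => //; rewrite /P; case: excluded_middle_informative => //.
        by rewrite mulVg.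
      rewrite -has_find hz.
      have := nth_find 1%g hz; rewrite /P; case: excluded_middle_informative => // hn _.
      by rewrite (sep _ _ (mem_nth _ _) zL hn) // -has_find.
    rewrite /sol (Sol_uniq hs).
    rewrite (@solf_local _ _ _ _ init (fun x => s x 0%N)) ?subrr ?normr0 // => x hx.
    apply: initL; apply/flattenP.
    by exists (reach S p.1 p.2) => //; apply: map_f.
-
  move=> nf s [_ hc] [_ [H [[h1 hM hV hC [reps hreps]] hper]]].
  apply: functional_extensionality => g; apply: functional_extensionality => t.
  apply: NNPP => hn; apply: nf.
  have [F hF] := hc t.
  have gF : g \in F by case/boolP: (g \in F) => // /hF.
  exists [seq (r * g^-1 * f)%g | r <- reps, f <- F] => x.
  have [r hr hx] := hreps x.
  apply/allpairsP; exists (r, (g * (r^-1 * x))%g) => /=; split => //.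
    by case/boolP: (_ \in F) => // /hF; rewrite hper // => /hn.
  by rewrite -mulgA mulKg mulVKg.
-
  move=> e he hall; split.
    move=> s; split; split.
    + by move=> hs; split => // t; exists e => g; rewrite hall.
    + by case.
    + move=> hs; split => //; exists (fun x => x = 1%g); split.
        split => //.
        * by move=> x y -> ->; rewrite mulg1.
        * by move=> x ->; rewrite invg1.
        * by move=> x g ->; rewrite mulg1 mulVg.
        * by exists e => g; exists g; rewrite ?hall ?mulVg.
      by move=> g h ->; rewrite mulg1.
    + by case.
  have Hi : forall g, (index g e < size e)%N by move=> g; rewrite index_mem hall.
  pose idx g := Ordinal (Hi g).
  pose f (v : 'rV[R[i]]_(size e)) := sol alpha S (fun g => v 0 (idx g)).
  exists f; split.
  + move=> a x y g t; rewrite /f /sol; apply: solf_lin => z; by rewrite !mxE.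
  + move=> x y hxy; apply/matrixP => i j; rewrite (ord1 i).
    have ij : idx (nth 1%g e j) = j by apply: val_inj; rewrite /= index_uniq.
    have := congr1 (fun F => F (nth 1%g e j) 0%N) hxy; by rewrite /f /sol /= ij.
  + move=> s; split.
      move=> hs; exists (\row_j s (nth 1%g e j) 0%N).
      rewrite {1}(Sol_eq hs) /f; congr sol; apply: functional_extensionality => g.
      by rewrite mxE /= nth_index.
    by move=> [v ->]; exact: sol_Sol.
Qed.
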